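(* Let $N=\{1,\ldots,n\}$, let $v$ be a vertex of $\mathscr{BG}_+(n)$, and let $\mathscr{D}=\{S: \varnothing\neq S\subsetneq N,\ v(S)=1\}$ be its associated collection. If $\mathscr{D}\neq\varnothing$, then \[ C(v)=\mathrm{conv}\{\mathbf{1}^{\{i\}}: i\in\textstyle\bigcap\mathscr{D}\}, \] so that the dimension of the core of $v$ is $|\bigcap\mathscr{D}|-1$. If $\mathscr{D}=\varnothing$, then $v=u_N$, whose core is the simplex $\{x\in\mathbb{R}^N_+:\sum_{i\in N}x_i=1\}$.
   Context: A game on $N$ is a map $v:2^N\to\mathbb{R}$ with $v(\varnothing)=0$. $u_N$ is the game with $u_N(N)=1$ and $u_N(S)=0$ for $S\neq N$. $\mathbf{1}^{\{i\}}\in\mathbb{R}^N$ is the $i$-th unit vector. The core is $C(v)=\{x\in\mathbb{R}^N: \sum_{i\in S}x_i\geqslant v(S)\ \forall S,\ \sum_{i\in N}x_i=v(N)\}$. $\mathscr{BG}_+(n)$ is the polytope (in $\mathbb{R}^{2^N\setminus\{\varnothing,N\}}$) of games $v$ with $v\geqslant 0$, $v(N)=1$ and $C(v)\neq\varnothing$. *)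

(* Defs.v *)
From mathcomp Require Import all_boot all_order all_algebra.
Set Implicit Arguments. Unset Strict Implicit. Unset Printing Implicit Defensive.
Import Order.TTheory GRing.Theory Num.Theory.
Local Open Scope ring_scope.

Section Defs.
Variables (R : realFieldType) (n : nat).

(* A game v : 2^N -> R (the condition v(emptyset) = 0 is imposed where needed). *)
Definition game := {ffun {set 'I_n} -> R}.

Definition in_core (v : game) (x : 'rV[R]_n) : Prop :=
  (forall S : {set 'I_n}, v S <= \sum_(i in S) x 0 i) /\
  \sum_(i < n) x 0 i = v setT.

Definition in_BGplus (v : game) : Prop :=
  v set0 = 0 /\ v setT = 1 /\ (forall S, 0 <= v S) /\ exists x, in_core v x.

(* Since the coordinates
   v(emptyset)=0 and v(N)=1 are fixed on BG_+(n), identifying games with their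
   coordinate vectors indexed by proper nonempty coalitions is harmless. *)
Definition is_vertex_BGplus (v : game) : Prop :=
  in_BGplus v /\
  forall (w1 w2 : game) (t : R), in_BGplus w1 -> in_BGplus w2 ->
    0 < t < 1 -> (forall S, v S = t * w1 S + (1 - t) * w2 S) -> w1 = w2.

Definition assoc_coll (v : game) : {set {set 'I_n}} :=
  [set S : {set 'I_n} | (S != set0) && (S != setT) && (v S == 1)].

Definition uN : game := [ffun S => if S == setT then 1 else 0].

Definition unitv (i : 'I_n) : 'rV[R]_n := delta_mx 0 i.

Definition in_conv_units (A : {set 'I_n}) (x : 'rV[R]_n) : Prop :=
  exists lam : 'I_n -> R,
    (forall i, 0 <= lam i) /\ \sum_(i in A) lam i = 1 /\
    x = \sum_(i in A) lam i *: unitv i.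

End Defs.

(* Main.v *)
Require Import Defs.
From mathcomp Require Import all_boot all_order all_algebra.
From mathcomp Require Import ring lra.
Import Order.TTheory GRing.Theory Num.Theory.
Local Open Scope ring_scope.

Section Helpers.
Variables (R : realFieldType) (n : nat).

Lemma sumT (F : 'I_n -> R) : \sum_(i in [set: 'I_n]) F i = \sum_i F i.
Proof. by apply: eq_bigl => i; rewrite in_setT. Qed.

Lemma sum_ind (S : {set 'I_n}) (k : 'I_n) (f : 'I_n -> R) :
  \sum_(j in S) (f j * (j == k)%:R) = (k \in S)%:R * f k.
Proof.
case: (boolP (k \in S)) => H.
  rewrite (bigD1 k) //= eqxx mulr1 mul1r big1 ?addr0 // => j /andP [_ /negbTE ->].
  by rewrite mulr0.
rewrite mul0r big1 // => j jS; case: eqP => [e|_]; last by rewrite mulr0.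
by subst; rewrite jS in H.
Qed.

Lemma unitvE (i j : 'I_n) : unitv R i 0 j = (j == i)%:R.
Proof. by rewrite /unitv mxE eqxx. Qed.

Lemma sum_unitv (S : {set 'I_n}) (i : 'I_n) :
  \sum_(j in S) unitv R i 0 j = (i \in S)%:R.
Proof.
rewrite -[RHS]mulr1 -(sum_ind S i (fun _ => 1)).
by apply: eq_bigr => j _; rewrite unitvE mul1r.
Qed.

Lemma core_ge0 (v : game R n) x : (forall S : {set 'I_n}, 0 <= v S) -> in_core v x ->
  forall j, 0 <= x 0 j.
Proof.
move=> v0 [c _] j; apply: le_trans (v0 [set j]) _.
by have := c [set j]; rewrite big_set1.
Qed.

Lemma perturb (v : game R n) (T : {set 'I_n}) y :
  is_vertex_BGplus v -> T != setT -> 0 < v T -> in_core v y ->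
  \sum_(j in T) y 0 j = v T.
Proof.
move=> [[v0 [v1 [vp _]]] vx] TN vT [yc ys].
set s := \sum_(j in T) y 0 j.
have vs : v T <= s by apply: yc.
case: (ltrP (v T) s) => [lt|]; last by move=> h; apply/eqP; rewrite eq_le h vs.
set e := Num.min (v T) (s - v T).
have e0 : 0 < e by rewrite lt_min vT subr_gt0 lt.
have e1 : e <= v T by rewrite ge_min lexx.
have e2 : e <= s - v T by rewrite ge_min lexx orbT.
have T0 : T != set0 by apply/eqP => E; move: vT; rewrite E v0 ltxx.
pose w1 : game R n := [ffun S => v S + (S == T)%:R * e].
pose w2 : game R n := [ffun S => v S - (S == T)%:R * e].
have h := vx w1 w2 (1/2).
have : w1 = w2.
  apply: h.
  - split; first by rewrite ffunE eq_sym (negbTE T0) mul0r addr0.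
    split; first by rewrite ffunE eq_sym (negbTE TN) mul0r addr0.
    split; first by move=> S; rewrite ffunE addr_ge0 // mulr_ge0 // ?ler0n ?ltW.
    exists y; split; last by rewrite ffunE eq_sym (negbTE TN) mul0r addr0.
    move=> S; rewrite ffunE; case: eqP => [->|_]; last by rewrite mul0r addr0.
    by rewrite mul1r -lerBrDl.
  - split; first by rewrite ffunE eq_sym (negbTE T0) mul0r subr0.
    split; first by rewrite ffunE eq_sym (negbTE TN) mul0r subr0.
    split; first by move=> S; rewrite ffunE; case: eqP => [->|_]; rewrite ?mul1r ?subr_ge0 // ?mul0r ?subr0.
    exists y; split; last by rewrite ffunE eq_sym (negbTE TN) mul0r subr0.
    move=> S; rewrite ffunE; apply: le_trans (yc S).
    by rewrite lerBlDr lerDl mulr_ge0 // ?ler0n ?ltW.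
  - by rewrite divr_gt0 //= ltr_pdivrMr // mul1r ltr1n.
  - move=> S; rewrite !ffunE; field.
  all: try done.
move=> E; have := congr1 (fun w : game R n => w T) E; rewrite !ffunE eqxx mul1r.
move=> hh; have : e = 0 by lra.
by move/eqP; rewrite (gt_eqF e0).
Qed.


Lemma sub_sum (S : {set 'I_n}) (f : 'I_n -> R) : (forall j, 0 <= f j) ->
  \sum_(j in S) f j <= \sum_j f j.
Proof.
move=> f0; rewrite big_mkcond /=; apply: ler_sum => j _.
by case: (j \in S).
Qed.

Lemma arith1 (V X a : R) : 0 < X -> 0 <= V -> V <= X -> a <= X -> 0 <= a ->
  [/\ 0 <= V - a * (V / X), V - a * (V / X) <= X - a & V / X <= 1].
Proof.
move=> X0 V0 VX aX a0.
have q1 : V / X <= 1 by rewrite ler_pdivrMr // mul1r.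
have q0 : 0 <= V / X by rewrite divr_ge0 // ltW.
have VE : V = V / X * X by field; rewrite gt_eqF.
set q := V / X in q1 q0 VE *.
split; rewrite ?VE; nra.
Qed.

Lemma exists_unit (v : game R n) : is_vertex_BGplus v ->
  exists i, in_core v (unitv R i).
Proof.
move=> [[v0 [v1 [vp [x xc]]]] vx].
have x0 := @core_ge0 v x vp xc.
have [c xs] := xc.
rewrite v1 in xs.
have [i xi] : exists i, 0 < x 0 i.
  case: (pickP (fun i => 0 < x 0 i)) => [i Hi|H]; first by exists i.
  exfalso; move: xs; rewrite big1 => [/eqP|j _]; first by rewrite eq_sym oner_eq0.
  by have := H j; move=> /negbT; rewrite -leNgt => h; apply/eqP; rewrite eq_le h x0.
set a := x 0 i in xi.
have sS : forall S : {set 'I_n}, i \in S -> a <= \sum_(j in S) x 0 j.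
  by move=> S iS; rewrite (bigD1 i) //= -/a lerDl sumr_ge0.
have S1 : forall S : {set 'I_n}, \sum_(j in S) x 0 j <= 1 by move=> S; rewrite -xs sub_sum.
have a1 : a <= 1 by rewrite -xs -sumT sS ?in_setT.
case: (eqVneq a 1) => [ea|na].
  have rest : \sum_(j | j != i) x 0 j = 0.
    by move: xs; rewrite (bigD1 i) //= -/a ea; lra.
  have z := psumr_eq0P (fun j _ => x0 j) rest.
  exists i; split; last by rewrite -sumT sum_unitv in_setT v1.
  move=> S; rewrite sum_unitv; case: (boolP (i \in S)) => iS.
    by apply: le_trans (c S) (S1 S).
  apply: le_trans (c S) _; rewrite big1 // => j jS; apply: z.
  by apply/eqP => e; subst; rewrite jS in iS.
have a1' : a < 1 by rewrite lt_neqAle na a1.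
have a10 : 0 < 1 - a by rewrite subr_gt0.
pose w1 : game R n := [ffun S : {set 'I_n} => if i \in S then v S / \sum_(j in S) x 0 j else 0].
pose w2 : game R n := [ffun S => (v S - a * w1 S) / (1 - a)].
pose y : 'rV[R]_n := \row_j ((x 0 j - a * (j == i)%:R) / (1 - a)).
have ys : forall S : {set 'I_n}, \sum_(j in S) y 0 j = (\sum_(j in S) x 0 j - (i \in S)%:R * a) / (1 - a).
  move=> S; rewrite -(sum_ind S i (fun _ => a)) -sumrB mulr_suml.
  by apply: eq_bigr => j _; rewrite mxE.
have xsT : \sum_(j in [set: 'I_n]) x 0 j = 1 by rewrite sumT.
have w1T : w1 setT = 1 by rewrite ffunE in_setT v1 xsT divr1.
have w2T : w2 setT = 1 by rewrite ffunE w1T v1 mulr1 divff // gt_eqF.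
have key : forall S : {set 'I_n}, i \in S -> [/\ 0 <= v S - a * (v S / \sum_(j in S) x 0 j),
   v S - a * (v S / \sum_(j in S) x 0 j) <= \sum_(j in S) x 0 j - a &
   v S / \sum_(j in S) x 0 j <= 1].
  move=> S iS; apply: arith1; last exact: ltW.
  - exact: lt_le_trans xi (sS S iS).
  - exact: vp.
  - exact: c.
  - exact: sS.
have c1 : in_core w1 (unitv R i).
  split; last by rewrite -sumT sum_unitv in_setT w1T.
  move=> S; rewrite ffunE sum_unitv; case: ifP => iS //.
  by have [_ _ ->] := key S iS.
have comb : forall S, v S = a * w1 S + (1 - a) * w2 S.
  by move=> S; rewrite [w2 S]ffunE; field; rewrite gt_eqF.
have E : w1 = w2.
  apply: (vx w1 w2 a).
  - split; first by rewrite ffunE in_set0.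
    split; first by [].
    split.
      move=> S; rewrite ffunE; case: ifP => // iS; rewrite divr_ge0 //.
      by apply: sumr_ge0 => j _.
    by exists (unitv R i).
  - split; first by rewrite ffunE ffunE in_set0 v0 mulr0 subr0 mul0r.
    split; first by [].
    split.
      move=> S; rewrite ffunE ffunE; apply: divr_ge0; last exact: ltW.
      case: ifP => iS; first by have [-> _ _] := key S iS.
      by rewrite mulr0 subr0.
    exists y; split; last by rewrite -sumT ys in_setT mul1r xsT w2T divff // gt_eqF.
    move=> S; rewrite ys ffunE ffunE ler_pM2r ?invr_gt0 //.
    case: ifP => iS; first by have [_ h _] := key S iS; rewrite mul1r.
    by rewrite mulr0 subr0 mul0r subr0 c.
  - by rewrite xi a1'.
  - exact: comb.
exists i.
have -> : v = w1.
  by apply/ffunP => S; rewrite comb -E; ring.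
exact: c1.
Qed.

Lemma v01 (v : game R n) : is_vertex_BGplus v -> forall S, v S = 0 \/ v S = 1.
Proof.
move=> V S; have [i ci] := @exists_unit v V.
have [[v0 [v1 [vp _]]] _] := V.
case: (eqVneq S setT) => [->|SN]; first by right.
case: (eqVneq (v S) 0) => [|nz]; first by left.
have pos : 0 < v S by rewrite lt_neqAle eq_sym nz vp.
have := @perturb v S (unitv R i) V SN pos ci; rewrite sum_unitv.
by case: (i \in S) => <-; [right|left].
Qed.

End Helpers.

Theorem proposition2 (R : realFieldType) (n : nat) (v : game R n) :
  is_vertex_BGplus v ->
  (assoc_coll v != set0 ->
     forall x : 'rV[R]_n,
       in_core v x <-> in_conv_units (\bigcap_(S in assoc_coll v) S) x) /\
  (assoc_coll v = set0 ->
     v = uN R n /\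
     forall x : 'rV[R]_n,
       in_core v x <-> ((forall i, 0 <= x 0 i) /\ \sum_(i < n) x 0 i = 1)).
Proof.
move=> V; have [[v0 [v1 [vp _]]] _] := V.
have h01 := @v01 R n v V.
have core0 : forall x, in_core v x -> forall j, 0 <= x 0 j :=
  fun x => @core_ge0 R n v x vp.
split.
- move=> Dn x; set I := \bigcap_(S in assoc_coll v) S.
  have inD : forall S : {set 'I_n}, S != set0 -> S != setT -> v S = 1 -> I \subset S.
    by move=> S a b c'; apply: bigcap_inf; rewrite inE a b c' eqxx.
  have notI : forall j, j \notin I -> exists S, (S \in assoc_coll v) /\ (j \notin S).
    move=> j jI.
    case: (pickP (fun S => (S \in assoc_coll v) && (j \notin S))) => [S /andP [] *|H].
      by exists S.
    exfalso; move/negP: jI; apply; apply/bigcapP => S SD.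
    by have := H S; rewrite SD /= => /negbFE.
  split.
  + move=> xc; have x0 := core0 x xc; have [c xs] := xc; rewrite v1 in xs.
    have xz : forall j, j \notin I -> x 0 j = 0.
      move=> j /notI [S [SD jS]]; move: SD; rewrite inE => /andP [/andP [_ _] /eqP vS1].
      have hS := c S; rewrite vS1 in hS.
      have h2 : 0 <= \sum_(k | k \notin S) x 0 k by apply: sumr_ge0.
      have : \sum_(k | k \notin S) x 0 k = 0.
        by move: xs; rewrite (bigID (fun k => k \in S)) /= => xs; lra.
      by move/(psumr_eq0P (fun k _ => x0 k)); apply.
    exists (fun j => x 0 j); split; first exact: x0.
    split.
      rewrite -[RHS]xs [RHS](bigID (fun k => k \in I)) /= [X in _ = _ + X]big1 ?addr0 //.
      all: try (by move=> k kI; exact: xz).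
    apply/rowP => k; rewrite summxE.
    rewrite (eq_bigr (fun j => x 0 j * (j == k)%:R)); last first.
      by move=> j _; rewrite mxE unitvE eq_sym.
    rewrite sum_ind; case: (boolP (k \in I)) => kI; first by rewrite mul1r.
    by rewrite mul0r xz.
  + move=> [lam [l0 [ls xe]]].
    have xk : forall k, x 0 k = (k \in I)%:R * lam k.
      move=> k; rewrite xe summxE (eq_bigr (fun j => lam j * (j == k)%:R)) ?sum_ind //.
      by move=> j _; rewrite mxE unitvE eq_sym.
    have full : forall S : {set 'I_n}, I \subset S -> \sum_(j in S) x 0 j = 1.
      move=> S IS; apply: eq_trans _ ls.
      rewrite big_mkcond [RHS]big_mkcond /=; apply: eq_bigr => k _; rewrite xk.
      case: (boolP (k \in I)) => kI; first by rewrite (subsetP IS k kI) mul1r.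
      by rewrite mul0r; case: (k \in S).
    split; last by rewrite v1 -sumT full // subsetT.
    move=> S; case: (h01 S) => vS; rewrite vS.
      by apply: sumr_ge0 => j _; rewrite xk mulr_ge0 ?ler0n.
    case: (eqVneq S setT) => [->|SN]; first by rewrite full // subsetT.
    case: (eqVneq S set0) => [S0|S0].
      by move: vS; rewrite S0 v0 => /eqP; rewrite eq_sym oner_eq0.
    by rewrite full // inD.
- move=> D0.
  have vS0 : forall S, S != setT -> v S = 0.
    move=> S SN; case: (h01 S) => // vS1.
    case: (eqVneq S set0) => [->|S0]; first exact: v0.
    exfalso; have : S \in assoc_coll v by rewrite inE S0 SN vS1 eqxx.
    by rewrite D0 inE.
  have vu : v = uN R n.
    apply/ffunP => S; rewrite ffunE; case: eqP => [->|/eqP SN]; [exact: v1 | exact: vS0].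
  split => // x; split.
    move=> xc; split; first exact: core0.
    by have [_ ->] := xc.
  move=> [x0 xs]; split; last by rewrite v1.
  move=> S; case: (eqVneq S setT) => [->|SN]; first by rewrite v1 sumT xs.
  by rewrite vS0 //; apply: sumr_ge0 => j _; exact: x0.
Qed.
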